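(* Let $\{(X_s,\|\cdot\|_s)\}_{s\in\mathbb N_0}$ be a sequence of reflexive Banach spaces such that $\{0\}\neq\bigcap_{s}X_s\subseteq\cdots\subseteq X_2\subseteq X_1\subseteq X_0$, $\|\cdot\|_0\le\|\cdot\|_1\le\|\cdot\|_2\le\cdots$, and $X_F:=\bigcap_s X_s$ is dense in $X_s$ for every $s$. Let $\{g_i\}_{i=1}^\infty\in(X_0^* )^{\mathbb N}$ with $g_i\ne0$ for all $i$. For $s\in\mathbb N_0$ and a scalar sequence $c=\{c_i\}$ put $M^c_s:=\{f\in X_s: |c_i|\le|g_i(f)|\ \forall i\}$, and define $$\Theta_s:=\{c: M^c_s\neq\varnothing\},\qquad \|c\|_s:=\inf\{\|f\|_s: f\in M^c_s\}.$$ Consider for $s\in\mathbb N_0$: $(\mathcal A_1^s)$: for all $c,d\in\Theta_s$, $f\in M^c_s$, $h\in M^d_s$ there is $r\in M^{c+d}_s$ with $\|r\|_s\le\|f\|_s+\|h\|_s$; $(\mathcal A_2^s)$: for every $c\in\Theta_s$ and $\varepsilon>0$ there exist $k\in\mathbb N$ and $f\in M^{c^{(k)}}_s$ with $\|f\|_s<\varepsilon$, where $c^{(k)}=\{0,\dots,0,c_{k+1},c_{k+2},\dots\}$; $(\mathcal A_3^s)$: there is $A_s\in(0,1]$ such that for every $f\in X_s$ and every $\widetilde f\in M_s^{\{g_i(f)\}_{i=1}^\infty}$, $A_s\|f\|_s\le\|\widetilde f\|_s$. Assume $(\mathcal A_1^s)$ holds for every $s\in\mathbb N_0$. Then: $(\mathcal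 P_1)$ $\{\Theta_s\}_{s\in\mathbb N_0}$ is a sequence of solid $BK$-spaces with $\bigcap_s\Theta_s\neq\{0\}$, $\cdots\subseteq\Theta_2\subseteq\Theta_1\subseteq\Theta_0$ and $\|\cdot\|_0\le\|\cdot\|_1\le\cdots$ on these spaces, such that $\{g_i|_{X_s}\}$ is a $\Theta_s$-Bessel sequence for $X_s$ with bound $1$ for every $s\in\mathbb N_0$; $(\mathcal P_2)$ for every $s\in\mathbb N$, $\{g_i|_{X_s}\}$ is a $\Theta_s$-frame for $X_s$ if and only if $(\mathcal A_3^s)$ holds, and if $(\mathcal A_3^s)$ holds with $A_s=1$ then $\{g_i|_{X_s}\}$ is a tight $\Theta_s$-frame for $X_s$; $(\mathcal P_3)$ for every $s\in\mathbb N$, $\Theta_s$ is a $CB$-space if and only if $(\mathcal A_2^s)$ holds.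
   Context: A Banach sequence space $\Theta$ is solid if $\{c_i\}\in\Theta$ and $|d_i|\le|c_i|$ for all $i$ imply $\{d_i\}\in\Theta$ with $\|\{d_i\}\|_\Theta\le\|\{c_i\}\|_\Theta$; a $BK$-space if coordinate functionals are continuous; a $CB$-space if it is a $BK$-space whose canonical unit vectors form a Schauder basis. For a Banach space $Y$ and a Banach sequence space $\Theta$, $\{g_i\}\subset Y^*$ is a $\Theta$-Bessel sequence for $Y$ with bound $B$ if $\{g_i(f)\}\in\Theta$ and $\|\{g_i(f)\}\|_\Theta\le B\|f\|$ for all $f\in Y$; a $\Theta$-frame if additionally $A\|f\|\le\|\{g_i(f)\}\|_\Theta$ for some $A>0$ and all $f$; tight if one can take $A=B$. *)

(* Defs.v *)
From HB Require Import structures.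
From mathcomp Require Import all_boot all_order all_algebra.
From mathcomp Require Import all_classical all_reals all_analysis.
Set Implicit Arguments. Unset Strict Implicit. Unset Printing Implicit Defensive.
Import Order.TTheory GRing.Theory Num.Theory.
Local Open Scope classical_set_scope.
Local Open Scope ring_scope.

Section Defs.
Variable R : realType.

(* ---------- generic notions for a "space" = subset S of a vector space
   with a function N : T -> R intended as a norm on S ---------- *)

Definition subspace_on (V : lmodType R) (S : set V) : Prop :=
  S 0 /\ (forall x y, S x -> S y -> S (x + y)) /\
  (forall (a : R) x, S x -> S (a *: x)).

Definition norm_on (V : lmodType R) (S : set V) (N : V -> R) : Prop :=
  (forall x, S x -> 0 <= N x) /\
  (forall x, S x -> N x = 0 -> x = 0) /\
  (forall (a : R) x, S x -> N (a *: x) = `|a| * N x) /\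
  (forall x y, S x -> S y -> N (x + y) <= N x + N y).

Definition complete_on (V : zmodType) (S : set V) (N : V -> R) : Prop :=
  forall u : nat -> V, (forall n, S (u n)) ->
  (forall e : R, 0 < e -> exists M, forall m n, (M <= m)%N -> (M <= n)%N ->
       N (u m - u n) < e) ->
  exists x, S x /\
    (forall e : R, 0 < e -> exists M, forall n, (M <= n)%N -> N (u n - x) < e).

Definition banach_on (V : lmodType R) (S : set V) (N : V -> R) : Prop :=
  subspace_on S /\ norm_on S N /\ complete_on S N.

Definition continuous_on (V : zmodType) (S : set V) (N : V -> R) (phi : V -> R)
  : Prop :=
  forall x, S x -> forall e : R, 0 < e -> exists2 d : R, 0 < d &
    forall y, S y -> N (y - x) < d -> `|phi y - phi x| < e.

Definition linear_on (V : lmodType R) (S : set V) (phi : V -> R) : Prop :=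
  forall (a : R) x y, S x -> S y -> phi (a *: x + y) = a * phi x + phi y.

Definition dual_on (V : lmodType R) (S : set V) (N : V -> R) : set (V -> R) :=
  [set g | linear_on S g /\ continuous_on S N g].

Definition opnorm (V : lmodType R) (S : set V) (N : V -> R) (g : V -> R) : R :=
  sup [set `|g x| | x in [set x | S x /\ N x <= 1]].

Definition reflexive_on (V : lmodType R) (S : set V) (N : V -> R) : Prop :=
  forall Phi : (V -> R) -> R,
    linear_on (dual_on S N) Phi ->
    continuous_on (dual_on S N) (opnorm S N) Phi ->
    exists2 x, S x & forall g, dual_on S N g -> Phi g = g x.

Definition dense_in (V : zmodType) (D S : set V) (N : V -> R) : Prop :=
  forall x, S x -> forall e : R, 0 < e -> exists2 y, D y & N (x - y) < e.

Definition seq_space (Th : set (nat -> R)) (nrm : (nat -> R) -> R) : Prop :=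
  banach_on Th nrm.

Definition solid (Th : set (nat -> R)) (nrm : (nat -> R) -> R) : Prop :=
  forall c d : nat -> R, Th c -> (forall i, `|d i| <= `|c i|) ->
    Th d /\ nrm d <= nrm c.

Definition BK_space (Th : set (nat -> R)) (nrm : (nat -> R) -> R) : Prop :=
  seq_space Th nrm /\ forall i : nat, continuous_on Th nrm (fun c => c i).

Definition unit_vec (j : nat) : nat -> R := fun i => if i == j then 1 else 0.

Definition schauder_basis (Th : set (nat -> R)) (nrm : (nat -> R) -> R)
  (b : nat -> nat -> R) : Prop :=
  (forall j, Th (b j)) /\
  forall c, Th c -> exists! a : nat -> R,
    nrm (c - \sum_(j < n) a j *: b j) @[n --> \oo] --> (0 : R^o).

Definition CB_space (Th : set (nat -> R)) (nrm : (nat -> R) -> R) : Prop :=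
  BK_space Th nrm /\ schauder_basis Th nrm unit_vec.

Definition coef_seq (V : Type) (g : nat -> V -> R) (f : V) : nat -> R :=
  fun i => g i f.

Definition bessel_with (V : Type) (X : set V) (N : V -> R) (g : nat -> V -> R)
  (Th : set (nat -> R)) (nrm : (nat -> R) -> R) (B : R) : Prop :=
  forall f, X f -> Th (coef_seq g f) /\ nrm (coef_seq g f) <= B * N f.

Definition bessel (V : Type) (X : set V) (N : V -> R) (g : nat -> V -> R)
  (Th : set (nat -> R)) (nrm : (nat -> R) -> R) : Prop :=
  exists B : R, bessel_with X N g Th nrm B.

Definition frame_with (V : Type) (X : set V) (N : V -> R) (g : nat -> V -> R)
  (Th : set (nat -> R)) (nrm : (nat -> R) -> R) (A B : R) : Prop :=
  0 < A /\ bessel_with X N g Th nrm B /\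
  forall f, X f -> A * N f <= nrm (coef_seq g f).

Definition frame (V : Type) (X : set V) (N : V -> R) (g : nat -> V -> R)
  (Th : set (nat -> R)) (nrm : (nat -> R) -> R) : Prop :=
  exists A B : R, frame_with X N g Th nrm A B.

Definition tight_frame (V : Type) (X : set V) (N : V -> R) (g : nat -> V -> R)
  (Th : set (nat -> R)) (nrm : (nat -> R) -> R) : Prop :=
  exists A : R, frame_with X N g Th nrm A A.

Definition Mset (V : Type) (X : set V) (g : nat -> V -> R) (c : nat -> R) : set V :=
  [set f | X f /\ forall i, `|c i| <= `|g i f|].

Definition Theta (V : Type) (X : set V) (g : nat -> V -> R) : set (nat -> R) :=
  [set c | Mset X g c !=set0].

Definition Theta_norm (V : Type) (X : set V) (N : V -> R) (g : nat -> V -> R)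
  (c : nat -> R) : R :=
  inf [set N f | f in Mset X g c].

Definition tail_seq (c : nat -> R) (k : nat) : nat -> R :=
  fun i => if (i < k)%N then 0 else c i.

Definition A1 (V : Type) (X : set V) (N : V -> R) (g : nat -> V -> R) : Prop :=
  forall c d : nat -> R, Theta X g c -> Theta X g d ->
  forall f h, Mset X g c f -> Mset X g d h ->
  exists2 r, Mset X g (fun i => c i + d i) r & N r <= N f + N h.

Definition A2 (V : Type) (X : set V) (N : V -> R) (g : nat -> V -> R) : Prop :=
  forall c, Theta X g c -> forall e : R, 0 < e ->
  exists k : nat, (0 < k)%N /\ exists2 f, Mset X g (tail_seq c k) f & N f < e.

Definition A3_with (V : Type) (X : set V) (N : V -> R) (g : nat -> V -> R)
  (A : R) : Prop :=
  forall f, X f -> forall ft, Mset X g (coef_seq g f) ft -> A * N f <= N ft.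

Definition A3 (V : Type) (X : set V) (N : V -> R) (g : nat -> V -> R) : Prop :=
  exists A : R, 0 < A /\ A <= 1 /\ A3_with X N g A.

End Defs.

(* Main.v *)
Require Import Defs.
From HB Require Import structures.
From mathcomp Require Import all_boot all_order all_algebra.
From mathcomp Require Import all_classical all_reals all_analysis.
From mathcomp Require Import ring lra.
Import Order.TTheory GRing.Theory Num.Theory.
Local Open Scope classical_set_scope.
Local Open Scope ring_scope.
Set Implicit Arguments. Unset Strict Implicit. Unset Printing Implicit Defensive.
Section HahnBanach.
Variables (R : realType) (V : lmodType R) (X : set V) (p : V -> R).
Hypothesis Xsub : subspace_on X.
Hypothesis pge0 : forall x, X x -> 0 <= p x.
Hypothesis pZ : forall (a : R) x, X x -> p (a *: x) = `|a| * p x.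
Hypothesis pD : forall x y, X x -> X y -> p (x + y) <= p x + p y.

Definition ext0 (D : set V) (phi : V -> R) :=
  D `<=` X /\ subspace_on D /\ linear_on D phi /\ (forall x, D x -> phi x <= p x).

Lemma lin0 (D : set V) phi : subspace_on D -> linear_on D phi -> phi 0 = 0.
Proof.
move=> [D0 _] lin; have := lin 1 0 0 D0 D0.
rewrite scale1r addr0 mul1r => H.
by apply: (@addrI _ (phi 0)); rewrite addr0 -H.
Qed.

Lemma linZ (D : set V) phi a x : subspace_on D -> linear_on D phi -> D x ->
  phi (a *: x) = a * phi x.
Proof.
move=> sD lin Dx; have := lin a x 0 Dx (proj1 sD).
by rewrite addr0 (lin0 sD lin) addr0.
Qed.

Lemma linD (D : set V) phi x y : subspace_on D -> linear_on D phi -> D x -> D y ->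
  phi (x + y) = phi x + phi y.
Proof. by move=> sD lin Dx Dy; have := lin 1 x y Dx Dy; rewrite scale1r mul1r. Qed.

Lemma subN (D : set V) x : subspace_on D -> D x -> D (- x).
Proof. by move=> [_ [_ sZ]] Dx; rewrite -scaleN1r; apply: sZ. Qed.

Lemma subB (D : set V) x y : subspace_on D -> D x -> D y -> D (x - y).
Proof. by move=> sD Dx Dy; apply: (proj1 (proj2 sD)) => //; apply: subN. Qed.

Section Step.
Variables (D : set V) (phi : V -> R) (y : V) (alpha : R).
Hypothesis eD : ext0 D phi.
Hypothesis Xy : X y.
Hypothesis nDy : ~ D y.
Hypothesis alo : forall d, D d -> phi d - p (d - y) <= alpha.
Hypothesis ahi : forall d, D d -> alpha <= p (d + y) - phi d.

Definition D' : set V := [set v | exists d t, D d /\ v = d + t *: y].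

Definition phi' (v : V) : R :=
  match pselect (exists dt : V * R, D dt.1 /\ v = dt.1 + dt.2 *: y) with
  | left H => let dt := projT1 (cid H) in phi dt.1 + dt.2 * alpha
  | right _ => 0
  end.

Lemma decomp_uniq d t d' t' : D d -> D d' -> d + t *: y = d' + t' *: y ->
  d = d' /\ t = t'.
Proof.
move=> Dd Dd' E.
have sD := proj1 (proj2 eD).
have htt : t = t'.
  apply/eqP; apply: contraT => ntt; exfalso; apply: nDy.
  have : (t - t') *: y = d' - d.
    by apply/eqP; rewrite scalerBl subr_eq eq_sym addrAC -E addrC addKr.
  move=> E2; have -> : y = (t - t')^-1 *: (d' - d).
    by rewrite -E2 scalerA mulVf ?scale1r // subr_eq0.
  by apply: (proj2 (proj2 sD)); apply: subB.
by split => //; move: E; rewrite htt => /addIr.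
Qed.

Lemma phi'E d t : D d -> phi' (d + t *: y) = phi d + t * alpha.
Proof.
move=> Dd; rewrite /phi'; case: pselect => [H|]; last first.
  by move=> nH; exfalso; apply: nH; exists (d, t).
case: (cid H) => [[d1 t1] /= [Dd1 E]].
by have [-> ->] := decomp_uniq Dd Dd1 E.
Qed.

Lemma phi'_ext x : D x -> phi' x = phi x.
Proof.
by move=> Dx; have := phi'E 0 Dx; rewrite scale0r addr0 mul0r addr0.
Qed.

Lemma phi'_y : phi' y = alpha.
Proof.
have sD := proj1 (proj2 eD).
have := phi'E 1 (proj1 sD); rewrite scale1r add0r mul1r => ->.
by rewrite (lin0 sD (proj1 (proj2 (proj2 eD)))) add0r.
Qed.

Lemma ext_step : ext0 D' phi'.
Proof.
have [DX [sD [lin pb]]] := eD.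
have [X0 [XD XZ]] := Xsub.
have D'X : D' `<=` X.
  by move=> _ [d [t [Dd ->]]]; apply: XD; [apply: DX|apply: XZ].
split => //; split.
  split; first by exists 0, 0; rewrite scale0r addr0; split => //; exact: proj1 sD.
  split.
    move=> _ _ [d [t [Dd ->]]] [e [u [De ->]]]; exists (d + e), (t + u); split.
      by apply: (proj1 (proj2 sD)).
    by rewrite scalerDl addrACA.
  move=> a _ [d [t [Dd ->]]]; exists (a *: d), (a * t); split.
    by apply: (proj2 (proj2 sD)).
  by rewrite scalerDr scalerA.
split.
  move=> a _ _ [d [t [Dd ->]]] [e [u [De ->]]].
  have -> : a *: (d + t *: y) + (e + u *: y) = (a *: d + e) + (a * t + u) *: y.
    by rewrite scalerDr scalerA addrACA scalerDl.
  rewrite !phi'E //; last by apply: (proj1 (proj2 sD)) => //; apply: (proj2 (proj2 sD)).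
  rewrite (proj1 (proj2 (proj2 eD))) //.
  by rewrite mulrDr mulrDl mulrA; ring.
move=> _ [d [t [Dd ->]]]; rewrite phi'E //.
have Dz a : D (a *: d) by apply: (proj2 (proj2 sD)).
have [t0|tn0] := eqVneq t 0.
  by rewrite t0 scale0r addr0 mul0r addr0; apply: pb.
have [tgt|tlt] := ltrP 0 t.
  have := ahi (Dz t^-1).
  rewrite lerBrDl => H.
  have -> : d + t *: y = t *: (t^-1 *: d + y).
    by rewrite scalerDr scalerA mulfV // scale1r.
  rewrite pZ; last by apply: XD; [apply: DX; apply: Dz|].
  rewrite gtr0_norm //.
  move: H; rewrite (linZ _ sD lin Dd) => H.
  have := ler_wpM2l (ltW tgt) H; rewrite mulrDr mulrA mulfV // mul1r.
  by rewrite addrC.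
have tlt' : t < 0 by rewrite lt_neqAle tn0.
have := alo (Dz (- t)^-1).
rewrite lerBlDr => H.
have -> : d + t *: y = (- t) *: ((- t)^-1 *: d - y).
  rewrite scalerDr scalerA mulfV ?oppr_eq0 // scale1r scalerN scaleNr opprK //.
rewrite pZ; last by apply: XD; [apply: DX; apply: Dz|apply: subN].
rewrite gtr0_norm ?oppr_gt0 //.
move: H; rewrite (linZ _ sD lin Dd) => H.
have nt : 0 < - t by rewrite oppr_gt0.
have := ler_wpM2l (ltW nt) H; rewrite mulrDr mulrA mulfV ?oppr_eq0 // mul1r.
rewrite !mulNr; lra.
Qed.
End Step.

Lemma p0 : p 0 = 0.
Proof. by rewrite -(scale0r (0 : V)) pZ ?normr0 ?mul0r //; exact: proj1 Xsub. Qed.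

Lemma pN x : X x -> p (- x) = p x.
Proof. by move=> Xx; rewrite -scaleN1r pZ // normrN normr1 mul1r. Qed.

Variable x0 : V.
Hypothesis Xx0 : X x0.

Definition goodp (dp : set V * (V -> R)) :=
  ext0 dp.1 dp.2 /\ dp.1 x0 /\ dp.2 x0 = p x0.
Definition Tp := {dp | goodp dp}.
Definition Rel (a b : Tp) : bool :=
  `[< (sval a).1 `<=` (sval b).1 /\
      forall x, (sval a).1 x -> (sval b).2 x = (sval a).2 x >].

Lemma tP (t : Tp) : [/\ (sval t).1 `<=` X, subspace_on (sval t).1,
  linear_on (sval t).1 (sval t).2, (forall x, (sval t).1 x -> (sval t).2 x <= p x)
  & (sval t).1 x0 /\ (sval t).2 x0 = p x0].
Proof. by case: t => [[D phi] [[? [? [? ?]]] ?]]. Qed.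

Lemma ext_triv : ext0 [set 0] (fun _ => 0).
Proof.
have [X0 _] := Xsub.
split; first by move=> _ ->.
split; first split => //.
  by split; [move=> _ _ -> ->; rewrite addr0|move=> a _ ->; rewrite scaler0].
split; first by move=> a _ _ _ _; rewrite mulr0 addr0.
by move=> _ ->; rewrite p0.
Qed.

Lemma Tp_inhabited : Tp.
Proof.
have [X0 _] := Xsub.
case: (pselect (x0 = 0)) => [x00|nx00].
  by exists ([set 0], (fun _ => 0)); split; [exact: ext_triv|split=> //=; rewrite x00 p0].
have nD : ~ [set 0] x0 by [].
have alo : forall d, [set 0] d -> (fun _ : V => 0) d - p (d - x0) <= p x0.
  move=> _ -> /=; rewrite !sub0r pN //.
  by have := pge0 Xx0; lra.
have ahi : forall d, [set 0] d -> p x0 <= p (d + x0) - (fun _ : V => 0) d.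
  by move=> _ -> /=; rewrite add0r subr0.
exists (D' [set 0] x0, phi' [set 0] (fun _ => 0) x0 (p x0)); split.
  exact: ext_step ext_triv Xx0 nD alo ahi.
split; first by exists 0, 1; split => //; rewrite add0r scale1r.
exact: phi'_y ext_triv nD.
Qed.

Lemma hahn_banach : exists h : V -> R,
  linear_on X h /\ (forall x, X x -> h x <= p x) /\ h x0 = p x0.
Proof.
have t0 := Tp_inhabited.
have [|||t tmax] := @ZL_preorder Tp t0 Rel.
- by move=> t; rewrite /Rel; apply/asboolP; split.
- rewrite /Rel => a b c /asboolP [ab1 ab2] /asboolP [bc1 bc2]; apply/asboolP; split.
    exact: subset_trans bc1.
  by move=> x Ax; rewrite bc2 ?ab2 //; apply: ab1.
- move=> A Atot.
  case: (pselect (A !=set0)) => [[ta Ata]|nA]; last first.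
    by exists t0 => s As; exfalso; apply: nA; exists s.
  pose DU := [set v | exists t, A t /\ (sval t).1 v].
  pose phiU (v : V) : R :=
    match pselect (exists t, A t /\ (sval t).1 v) with
    | left H => (sval (projT1 (cid H))).2 v | right _ => 0 end.
  have phiUE t v : A t -> (sval t).1 v -> phiU v = (sval t).2 v.
    move=> At Dv; rewrite /phiU; case: pselect => [H|nH]; last first.
      by exfalso; apply: nH; exists t.
    case: (cid H) => t' [At' Dv'] /=.
    by have [/asboolP [_ ->]|/asboolP [_ ->]] := Atot _ _ At At'.
  have big2 t1 t2 : A t1 -> A t2 -> exists t, [/\ A t,
      (sval t1).1 `<=` (sval t).1 & (sval t2).1 `<=` (sval t).1].
    move=> A1 A2; have [|] := Atot _ _ A1 A2; rewrite /Rel => /asboolP [s12 _].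
      by exists t2; split.
    by exists t1; split.
  have gU : goodp (DU, phiU).
    have [DX [D0 [DD DZ]] lin pb [Dx0 px0]] := tP ta.
    split; last first.
      split; first by exists ta.
      by rewrite /= (phiUE ta).
    split.
      by move=> v [t [At Dv]]; have [DXt _ _ _ _] := tP t; apply: DXt.
    split.
      split; first by exists ta.
      split.
        move=> u v [t1 [A1 D1]] [t2 [A2 D2]].
        have [t [At s1 s2]] := big2 _ _ A1 A2.
        have [_ [_ [Dt _]] _ _ _] := tP t.
        by exists t; split => //; apply: Dt; [apply: s1|apply: s2].
      move=> a v [t [At Dv]]; exists t; split => //.
      by have [_ [_ [_ Dt]] _ _ _] := tP t; apply: Dt.
    split.
      move=> a u v [t1 [A1 D1]] [t2 [A2 D2]].
      have [t [At s1 s2]] := big2 _ _ A1 A2.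
      have [_ [_ [DtD DtZ]] lint _ _] := tP t.
      have Du := s1 _ D1; have Dv := s2 _ D2.
      rewrite /= (phiUE t) //; last by apply: DtD => //; apply: DtZ.
      by rewrite (phiUE t u) // (phiUE t v) //; apply: lint.
    move=> v [t [At Dv]]; rewrite /= (phiUE t) //.
    by have [_ _ _ pbt _] := tP t; apply: pbt.
  exists (exist _ (DU, phiU) gU) => s As; rewrite /Rel; apply/asboolP; split => /=.
    by move=> v Dv; exists s.
  by move=> x Dx; apply: phiUE.
- case: t tmax => [[D phi] [eD [Dx0 px0]]] tmax.
  have XD : X `<=` D.
    move=> y Xy; apply: contrapT => nDy.
    pose S := [set phi d - p (d - y) | d in D].
    have [DX [sD [lin pb]]] := eD.
    have [X0 [XD XZ]] := Xsub.
    have key d e : D d -> D e -> phi d - p (d - y) <= p (e + y) - phi e.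
      move=> Dd De.
      have h1 : phi d + phi e <= p (d + e).
        by rewrite -(linD sD lin Dd De); apply: pb; apply: (proj1 (proj2 sD)).
      have h2 : p (d + e) <= p (d - y) + p (e + y).
        have -> : d + e = (d - y) + (e + y) by rewrite addrACA addNr addr0.
        by apply: pD; [apply: subB Xsub (DX _ Dd) Xy|apply: XD (DX _ De) Xy].
      lra.
    have S0 : S !=set0 by exists (phi 0 - p (0 - y)), 0 => //; exact: proj1 sD.
    have Sub : ubound S (p (0 + y) - phi 0).
      by move=> _ [d Dd <-]; apply: key => //; exact: proj1 sD.
    have alo d : D d -> phi d - p (d - y) <= sup S.
      by move=> Dd; apply: (ub_le_sup (ex_intro _ _ Sub)); exists d.
    have ahi e : D e -> sup S <= p (e + y) - phi e.
      by move=> De; apply: ge_sup => // _ [d Dd <-]; apply: key.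
    have gs : goodp (D' D y, phi' D phi y (sup S)).
      split; first exact: ext_step eD Xy nDy alo ahi.
      split; first by exists x0, 0; split => //; rewrite scale0r addr0.
      by rewrite /= phi'_ext.
    have := tmax (exist _ _ gs).
    have R1 : Rel (exist goodp (D, phi) (conj eD (conj Dx0 px0))) (exist _ _ gs).
      apply/asboolP; split => /=.
        by move=> v Dv; exists v, 0; split => //; rewrite scale0r addr0.
      by move=> x Dx; rewrite phi'_ext.
    move=> /(_ R1) /asboolP [/= sub _]; apply: nDy; apply: sub.
    by exists 0, 1; split; [exact: proj1 sD|rewrite add0r scale1r].
  have [DX [sD [lin pb]]] := eD.
  exists phi; split; first by move=> a x y Xx Xy; apply: lin; apply: XD.
  by split => // x Xx; apply: pb; apply: XD.
Qed.

End HahnBanach.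

Section ULim.
Variables (R : realType) (U : set_system nat).
Hypothesis UU : UltraFilter U.

Definition islim (x : nat -> R) (L : R) :=
  forall e : R, 0 < e -> U [set n | `|x n - L| < e].

Lemma U_ex (A : set nat) : U A -> exists n, A n.
Proof. by move=> UA; have [n An] := filter_ex UA; exists n. Qed.

Lemma ulim_ex x B : U [set n | `|x n| <= B] -> exists L, islim x L /\ `|L| <= B.
Proof.
move=> UB.
pose S := [set t | U [set n | t <= x n]].
have SB : S (- B).
  by apply: filterS UB => n /=; rewrite ler_norml => /andP[].
have Sub : ubound S B.
  move=> t St; rewrite leNgt; apply/negP => Bt.
  have [n [h1 h2]] := U_ex (filterI St UB).
  move: h2 => /= ; rewrite ler_norml => /andP[_] h2; move: h1 => /= h1; lra.
have S0 : S !=set0 by exists (- B).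
have hS : has_sup S by split => //; exists B.
exists (sup S); split; last first.
  rewrite ler_norml; apply/andP; split; last exact: ge_sup.
  exact: (ub_le_sup (ex_intro _ _ Sub)).
move=> e e0.
have e20 : 0 < e / 2 by rewrite divr_gt0.
have [t St lt] := sup_adherent e20 hS.
have nS : ~ S (sup S + e / 2).
  move=> H; have := ub_le_sup (ex_intro _ _ Sub) H; lra.
have [//|UC] := in_ultra_setVsetC [set n | sup S + e / 2 <= x n] UU.
apply: filterS (filterI St UC) => n [/= h1 h2]; rewrite ltr_norml.
move: h2 => /negP; rewrite -ltNge => h2; apply/andP; split; lra.
Qed.

Lemma islim_uniq x L M : islim x L -> islim x M -> L = M.
Proof.
move=> hL hM; apply/eqP; apply: contraT => nLM.
have e0 : 0 < `|L - M| / 2 by rewrite divr_gt0 // normr_gt0 subr_eq0.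
have [n [h1 h2]] := U_ex (filterI (hL _ e0) (hM _ e0)).
move: h1 h2 => /= h1 h2.
have := ler_distD (x n) L M; rewrite (distrC L (x n)) => H.
exfalso; lra.
Qed.

Lemma islim_lin x y L M a b : islim x L -> islim y M ->
  islim (fun n => a * x n + b * y n) (a * L + b * M).
Proof.
move=> hL hM e e0.
have k0 : 0 < e / (2 * (`|a| + `|b| + 1)).
  by rewrite divr_gt0 // mulr_gt0 // ltr_wpDl ?addr_ge0.
apply: filterS (filterI (hL _ k0) (hM _ k0)) => n [h1 h2] /=.
set k := e / (2 * (`|a| + `|b| + 1)) in k0 h1 h2 *.
have -> : a * x n + b * y n - (a * L + b * M) = a * (x n - L) + b * (y n - M) by ring.
apply: (le_lt_trans (ler_normD _ _)); rewrite !normrM.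
have ha := ler_wpM2l (normr_ge0 a) (ltW h1).
have hb := ler_wpM2l (normr_ge0 b) (ltW h2).
have : (`|a| + `|b| + 1) * k = e / 2.
  have nz : `|a| + `|b| + 1 != 0 by rewrite gt_eqF // ltr_wpDl ?addr_ge0.
  rewrite /k; field; by rewrite nz.
have := normr_ge0 a; have := normr_ge0 b.
nra.
Qed.

Lemma islim_bound x L B : islim x L -> U [set n | `|x n| <= B] -> `|L| <= B.
Proof.
move=> hL UB; have [M [hM MB]] := ulim_ex UB.
by rewrite (islim_uniq hL hM).
Qed.

End ULim.

Section Weak.
Variables (R : realType) (V : lmodType R) (X : set V) (N : V -> R).
Hypothesis BX : banach_on X N.

Let sX := proj1 BX.
Let Nge0 : forall x, X x -> 0 <= N x := proj1 (proj1 (proj2 BX)).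
Let Ndef : forall x, X x -> N x = 0 -> x = 0 := proj1 (proj2 (proj1 (proj2 BX))).
Let NZ : forall (a : R) x, X x -> N (a *: x) = `|a| * N x :=
  proj1 (proj2 (proj2 (proj1 (proj2 BX)))).
Let ND : forall x y, X x -> X y -> N (x + y) <= N x + N y :=
  proj2 (proj2 (proj2 (proj1 (proj2 BX)))).

Lemma X0 : X 0. Proof. exact: proj1 sX. Qed.
Lemma XD x y : X x -> X y -> X (x + y). Proof. exact: (proj1 (proj2 sX)). Qed.
Lemma XZ a x : X x -> X (a *: x). Proof. exact: (proj2 (proj2 sX)). Qed.
Lemma XB x y : X x -> X y -> X (x - y). Proof. exact: subB sX. Qed.

Lemma Nzero : N 0 = 0.
Proof. by rewrite -(scale0r (0 : V)) NZ ?normr0 ?mul0r //; exact: X0. Qed.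

Lemma NN x : X x -> N (- x) = N x.
Proof. by move=> Xx; rewrite -scaleN1r NZ // normrN normr1 mul1r. Qed.

Lemma dual_bounded h : dual_on X N h ->
  exists K, 0 <= K /\ forall x, X x -> `|h x| <= K * N x.
Proof.
move=> [lin cont].
have h0 := lin0 sX lin.
have [d d0 Hd] := cont 0 X0 1 ltr01.
exists (2 / d); split; first by rewrite divr_ge0 // ltW.
move=> x Xx.
have [Nx0|Nxn0] := eqVneq (N x) 0.
  by rewrite (Ndef Xx Nx0) h0 normr0 Nzero mulr0.
have Nxp : 0 < N x by rewrite lt_neqAle eq_sym Nxn0 Nge0.
set c := d / (2 * N x).
have c0 : 0 < c by rewrite divr_gt0 // mulr_gt0.
have := Hd (c *: x) (XZ c Xx).
rewrite subr0 h0 subr0 NZ // gtr0_norm // (linZ _ sX lin Xx) normrM gtr0_norm //.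
have -> : c * N x = d / 2 by rewrite /c; field; rewrite Nxn0.
have -> : 2 / d * N x = c^-1 by rewrite /c; field; rewrite Nxn0 gt_eqF.
move=> /(_ ltac:(lra)) H.
have cn0 : c != 0 by rewrite gt_eqF.
by rewrite -(ler_pM2l c0) mulfV //; exact: ltW H.
Qed.

Lemma opnormP h : dual_on X N h ->
  0 <= opnorm X N h /\ forall x, X x -> `|h x| <= opnorm X N h * N x.
Proof.
move=> hd; have [K [K0 HK]] := dual_bounded hd.
have h0 := lin0 sX (proj1 hd).
set E := [set `|h x| | x in [set x | X x /\ N x <= 1]].
have E0 : E 0 by exists 0; [split; [exact: X0|rewrite Nzero]|rewrite h0 normr0].
have Eub : ubound E K.
  move=> _ [x [Xx Nx] <-]; apply: le_trans (HK _ Xx) _.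
  by rewrite -[X in _ <= X]mulr1 ler_wpM2l.
have sup0 : 0 <= sup E by apply: (ub_le_sup (ex_intro _ _ Eub)).
split => // x Xx.
have [Nx0|Nxn0] := eqVneq (N x) 0.
  by rewrite (Ndef Xx Nx0) h0 normr0 Nzero mulr0.
have Nxp : 0 < N x by rewrite lt_neqAle eq_sym Nxn0 Nge0.
have : E `|h ((N x)^-1 *: x)|.
  exists ((N x)^-1 *: x) => //; split; first exact: XZ.
  by rewrite NZ // normfV gtr0_norm // mulVf.
move=> /(ub_le_sup (ex_intro _ _ Eub)).
rewrite (linZ _ sX (proj1 hd) Xx) normrM normfV (gtr0_norm Nxp) => H.
have := ler_wpM2l (ltW Nxp) H; rewrite mulrA mulfV // mul1r mulrC //.
Qed.

Lemma dual_lin (h1 h2 : V -> R) a b : dual_on X N h1 -> dual_on X N h2 ->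
  dual_on X N (fun v => a * h1 v + b * h2 v).
Proof.
move=> [l1 c1] [l2 c2]; split.
  by move=> c x y Xx Xy /=; rewrite l1 // l2 //; ring.
move=> x Xx e e0.
have k0 : 0 < e / (2 * (`|a| + `|b| + 1)).
  by rewrite divr_gt0 // mulr_gt0 // ltr_wpDl ?addr_ge0.
set k := e / (2 * (`|a| + `|b| + 1)) in k0 *.
have [d1 d10 H1] := c1 x Xx k k0.
have [d2 d20 H2] := c2 x Xx k k0.
exists (Num.min d1 d2); first by rewrite lt_min d10 d20.
move=> y Xy; rewrite lt_min => /andP[y1 y2].
have g1 := ltW (H1 y Xy y1); have g2 := ltW (H2 y Xy y2).
have -> : a * h1 y + b * h2 y - (a * h1 x + b * h2 x) =
  a * (h1 y - h1 x) + b * (h2 y - h2 x) by ring.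
apply: (le_lt_trans (ler_normD _ _)); rewrite !normrM.
have ha := ler_wpM2l (normr_ge0 a) g1.
have hb := ler_wpM2l (normr_ge0 b) g2.
have : (`|a| + `|b| + 1) * k = e / 2.
  have nz : `|a| + `|b| + 1 != 0 by rewrite gt_eqF // ltr_wpDl ?addr_ge0.
  rewrite /k; field; by rewrite nz.
have := normr_ge0 a; have := normr_ge0 b.
nra.
Qed.

Hypothesis RX : reflexive_on X N.

Lemma weak_limit (U : set_system nat) (UU : UltraFilter U) (r : nat -> V) (B : R) :
  (forall n, X (r n)) -> (forall n, N (r n) <= B) ->
  exists2 rs, X rs /\ N rs <= B &
    forall h, dual_on X N h -> islim U (fun n => h (r n)) (h rs).
Proof.
move=> Xr rB.
have B0 : 0 <= B by apply: le_trans (rB 0%N); apply: Nge0.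
pose Phi (h : V -> R) := xget 0 [set L | islim U (fun n => h (r n)) L].
have bnd h : dual_on X N h -> U [set n | `|h (r n)| <= opnorm X N h * B].
  move=> hd; apply: filterS filterT => n _ /=.
  have [on0 Hon] := opnormP hd.
  by apply: le_trans (Hon _ (Xr n)) _; apply: ler_wpM2l.
have PhiP h : dual_on X N h -> islim U (fun n => h (r n)) (Phi h).
  move=> hd; have [L [HL _]] := ulim_ex UU (bnd _ hd).
  exact: (@xgetPex _ 0 [set L | islim U (fun n => h (r n)) L] (ex_intro _ L HL)).
have PhiL h1 h2 a b : dual_on X N h1 -> dual_on X N h2 ->
    Phi (fun v => a * h1 v + b * h2 v) = a * Phi h1 + b * Phi h2.
  move=> d1 d2; apply: (islim_uniq UU (PhiP _ (dual_lin a b d1 d2))).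
  exact: islim_lin (PhiP _ d1) (PhiP _ d2).
have [rs Xrs Hrs] : exists2 rs, X rs & forall h, dual_on X N h -> Phi h = h rs.
  apply: RX.
    move=> a h1 h2 d1 d2.
    have -> : a *: h1 + h2 = (fun v => a * h1 v + 1 * h2 v).
      by apply: funext => v /=; rewrite mul1r.
    by rewrite PhiL // mul1r.
  move=> h hd e e0; exists (e / (B + 1)); first by rewrite divr_gt0 // ltr_wpDl.
  move=> y yd.
  have kd : dual_on X N (fun v => 1 * y v + (-1) * h v) by apply: dual_lin.
  have -> : y - h = (fun v => 1 * y v + (-1) * h v).
    by apply: funext => v /=; rewrite mul1r mulN1r.
  move=> lt.
  have := islim_bound UU (PhiP _ kd) (bnd _ kd).
  rewrite PhiL // mul1r mulN1r => H.
  apply: (le_lt_trans H).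
  have [on0 _] := opnormP kd.
  apply: (le_lt_trans (ler_wpM2r B0 (ltW lt))).
  rewrite mulrAC ltr_pdivrMr ?ltr_wpDl //; nra.
exists rs => //.
  split => //.
  have [h [lin [hle hrs]]] := hahn_banach sX Nge0 NZ ND Xrs.
  have habs x : X x -> `|h x| <= N x.
    move=> Xx; rewrite ler_norml hle // andbT.
    have := hle _ (subN sX Xx); rewrite NN // -scaleN1r (linZ _ sX lin Xx); lra.
  have hd : dual_on X N h.
    split => // x Xx e e0; exists e => // y Xy lt.
    have <- : h (y - x) = h y - h x.
      by rewrite -scaleN1r (linD sX lin Xy (XZ _ Xx)) (linZ _ sX lin Xx) mulN1r.
    by apply: le_lt_trans lt; apply: habs; apply: XB.
  have := islim_bound UU (PhiP _ hd) (B := B).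
  rewrite Hrs // hrs ger0_norm; last exact: Nge0.
  apply; apply: filterS filterT => n _ /=.
  by apply: le_trans (habs _ (Xr n)) (rB n).
by move=> h hd; rewrite -Hrs //; apply: PhiP.
Qed.

End Weak.

Section ThetaSec.
Variables (R : realType) (V : lmodType R) (X : set V) (N : V -> R)
  (g : nat -> V -> R).
Hypothesis BX : banach_on X N.
Hypothesis glin : forall i, linear_on X (g i).
Hypothesis gK : forall i, exists K, 0 <= K /\ forall x, X x -> `|g i x| <= K * N x.
Hypothesis A1X : A1 X N g.

Let sX := proj1 BX.
Let Nge0 : forall x, X x -> 0 <= N x := proj1 (proj1 (proj2 BX)).
Let NZ : forall (a : R) x, X x -> N (a *: x) = `|a| * N x :=
  proj1 (proj2 (proj2 (proj1 (proj2 BX)))).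

Local Notation Th := (Theta X g).
Local Notation nr := (Theta_norm X N g).
Local Notation M := (Mset X g).

Lemma nr_le c f : M c f -> nr c <= N f.
Proof.
move=> Mf; rewrite /Theta_norm /inf lerNl.
apply: (ub_le_sup (E := [set - x | x in [set N f0 | f0 in M c]])).
  exists 0 => _ [_ [f0 [Xf0 _] <-] <-]; rewrite oppr_le0; exact: Nge0.
by exists (N f) => //; exists f.
Qed.

Lemma nr_ge0 c : Th c -> 0 <= nr c.
Proof.
move=> [f Mf]; apply: lb_le_inf; first by exists (N f), f.
by move=> _ [h [Xh _] <-]; exact: Nge0.
Qed.

Lemma nr_glb c b : Th c -> (forall f, M c f -> b <= N f) -> b <= nr c.
Proof.
move=> [f Mf] H; apply: lb_le_inf; first by exists (N f), f.
by move=> _ [h Mh <-]; exact: H.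
Qed.

Lemma nr_lt c b : Th c -> nr c < b -> exists2 f, M c f & N f < b.
Proof.
move=> [f Mf] lt; have [_ [h Mh <-] hb] := inf_lt (ex_intro _ (N f) (ex_intro2 _ _ f Mf erefl)) lt.
by exists h.
Qed.

Lemma gZ i a x : X x -> g i (a *: x) = a * g i x.
Proof. by move=> Xx; apply: linZ sX (glin i) Xx. Qed.
Lemma gD i x y : X x -> X y -> g i (x + y) = g i x + g i y.
Proof. by move=> Xx Xy; apply: linD sX (glin i) Xx Xy. Qed.

Lemma Th0 : Th 0.
Proof. by exists 0; split; [exact: (proj1 sX)|move=> i; rewrite normr0 normr_ge0]. Qed.

Lemma MZ c f a : M c f -> M (a *: c) (a *: f).
Proof.
move=> [Xf Hf]; split; first exact: (proj2 (proj2 sX)) a f Xf.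
by move=> i; rewrite gZ // !normrM /=; apply: ler_wpM2l.
Qed.

Lemma ThZ c a : Th c -> Th (a *: c).
Proof. by move=> [f Mf]; exists (a *: f); apply: MZ. Qed.

Lemma ThD c d : Th c -> Th d -> Th (c + d).
Proof.
move=> Tc Td; have [f Mf] := Tc; have [h Mh] := Td.
by have [r Mr _] := A1X Tc Td Mf Mh; exists r.
Qed.

Lemma ThB c d : Th c -> Th d -> Th (c - d).
Proof. by move=> Tc Td; apply: ThD => //; rewrite -scaleN1r; apply: ThZ. Qed.

Lemma coord_bound i : exists K, 0 <= K /\ forall c, Th c -> `|c i| <= K * nr c.
Proof.
have [K [K0 HK]] := gK i; exists K; split => // c Tc.
apply/ler_addgt0Pr => e e0.
have Kp : 0 < K + 1 by rewrite ltr_wpDl.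
have [f [Xf Hf] Nf] := nr_lt Tc (ltr_pwDr (divr_gt0 e0 Kp) (lexx (nr c))).
have := le_trans (Hf i) (HK _ Xf).
move=> H; have := ler_wpM2l K0 (ltW Nf).
have : K * (e / (K + 1)) <= e.
  rewrite mulrA ler_pdivrMr // ; nra.
lra.
Qed.

Lemma Mcoord c f i : M c f -> `|c i| <= `|g i f|.
Proof. by move=> [_ H]. Qed.

Lemma nrZle c a : Th c -> nr (a *: c) <= `|a| * nr c.
Proof.
move=> Tc; apply/ler_addgt0Pr => e e0.
have Ap : 0 < `|a| + 1 by rewrite ltr_wpDl.
have [f Mf Nf] := nr_lt Tc (ltr_pwDr (divr_gt0 e0 Ap) (lexx (nr c))).
apply: le_trans (nr_le (MZ a Mf)) _; rewrite NZ; last by case: Mf.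
have := ler_wpM2l (normr_ge0 a) (ltW Nf).
have : `|a| * (e / (`|a| + 1)) <= e by rewrite mulrA ler_pdivrMr //; nra.
lra.
Qed.

Lemma nr0 : nr 0 = 0.
Proof.
apply/eqP; rewrite eq_le nr_ge0 ?andbT; last exact: Th0.
have M00 : M 0 0 by split; [exact: (proj1 sX)|move=> i; rewrite normr0 normr_ge0].
by apply: le_trans (nr_le M00) _; rewrite (Nzero BX).
Qed.

Lemma nrZ c a : Th c -> nr (a *: c) = `|a| * nr c.
Proof.
move=> Tc; have [->|a0] := eqVneq a 0.
  by rewrite scale0r normr0 mul0r nr0.
apply/eqP; rewrite eq_le nrZle //=.
have := nrZle (a^-1) (ThZ a Tc); rewrite scalerA mulVf // scale1r normfV => H.
have ap : 0 < `|a| by rewrite normr_gt0.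
by rewrite -(ler_pM2l ap) mulrA mulfV ?normr_eq0 // mul1r in H.
Qed.

Lemma nrD c d : Th c -> Th d -> nr (c + d) <= nr c + nr d.
Proof.
move=> Tc Td; apply/ler_addgt0Pr => e e0.
have e2 : 0 < e / 2 by rewrite divr_gt0.
have [f Mf Nf] := nr_lt Tc (ltr_pwDr e2 (lexx (nr c))).
have [h Mh Nh] := nr_lt Td (ltr_pwDr e2 (lexx (nr d))).
have [r Mr Nr] := A1X Tc Td Mf Mh.
have := nr_le Mr; lra.
Qed.

Lemma nr_def c : Th c -> nr c = 0 -> c = 0.
Proof.
move=> Tc n0; apply: funext => i /=.
have [K [K0 HK]] := coord_bound i.
by apply/eqP; rewrite -normr_eq0 eq_le normr_ge0 andbT; have := HK c Tc; rewrite n0 mulr0.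
Qed.

Lemma solid_Th : solid Th nr.
Proof.
move=> c d Tc cd.
have sub : M c `<=` M d by move=> f [Xf Hf]; split => // i; apply: le_trans (Hf i).
split; first by have [f Mf] := Tc; exists f; apply: sub.
by apply: nr_glb => // f Mf; apply: nr_le; apply: sub.
Qed.

Lemma g_dual i : dual_on X N (g i).
Proof.
split; first exact: glin.
have [K [K0 HK]] := gK i.
move=> x Xx e e0; exists (e / (K + 1)); first by rewrite divr_gt0 // ltr_wpDl.
move=> y Xy lt.
have <- : g i (y - x) = g i y - g i x.
  by rewrite -scaleN1r gD ?gZ ?mulN1r //; apply: (proj2 (proj2 sX)).
apply: le_lt_trans (HK _ (XB BX Xy Xx)) _.
apply: le_lt_trans (ler_wpM2l K0 (ltW lt)) _.
rewrite mulrA ltr_pdivrMr ?ltr_wpDl //; nra.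
Qed.

Lemma BK_Th_coord i : continuous_on Th nr (fun c => c i).
Proof.
have [K [K0 HK]] := coord_bound i.
move=> c Tc e e0; exists (e / (K + 1)); first by rewrite divr_gt0 // ltr_wpDl.
move=> d Td lt.
have := HK _ (ThB Td Tc) => /= H.
apply: le_lt_trans H _.
apply: le_lt_trans (ler_wpM2l K0 (ltW lt)) _.
rewrite mulrA ltr_pdivrMr ?ltr_wpDl //; nra.
Qed.

Hypothesis RX : reflexive_on X N.

Lemma islim_const (U : set_system nat) (UU : UltraFilter U) (a : R) :
  islim U (fun _ => a) a.
Proof.
have FU : ProperFilter U := @ultra_proper _ _ UU.
by move=> e e0; apply: filterS filterT => n _ /=; rewrite subrr normr0. Qed.

Lemma islim_ge (U : set_system nat) (UU : UltraFilter U) (x y : nat -> R) (L L' : R) :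
  islim U x L -> islim U y L' -> U [set n | `|y n| <= `|x n|] -> `|L'| <= `|L|.
Proof.
move=> hx hy hU; apply/ler_addgt0Pr => e e0.
have FU : ProperFilter U := @ultra_proper _ _ UU.
have e2 : 0 < e / 2 by rewrite divr_gt0.
have F1 : U ([set n | `|x n - L| < e / 2] `&` [set n | `|y n - L'| < e / 2]).
  exact: filterI (hx _ e2) (hy _ e2).
have [n [[h1 h2] h3]] := U_ex UU (filterI F1 hU).
move: h1 h2 h3 => /= h1 h2 h3.
have := ler_distD (y n) L' 0; rewrite !subr0 distrC => a1.
have := ler_distD L (x n) 0; rewrite !subr0 => a2.
lra.
Qed.

Lemma complete_Th : complete_on Th nr.
Proof.
move=> u Tu Cu.
have [U [UU sU]] := ultraFilterLemma (eventually_filter : ProperFilter (\oo : set_system nat)).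
have FU : ProperFilter U := @ultra_proper _ _ UU.
have Uge m : U [set n | (m <= n)%N].
  by apply: sU; exists m.
pose c (i : nat) := xget 0 [set L | islim U (fun n => u n i) L].
have cP i : islim U (fun n => u n i) (c i).
  have [M0 HM0] := Cu 1 ltr01.
  have [K [K0 HK]] := coord_bound i.
  have UB : U [set n | `|u n i| <= `|u M0 i| + K].
    apply: filterS (Uge M0) => n /= Mn.
    have := HK _ (ThB (Tu n) (Tu M0)); rewrite /= => H.
    have := ltW (HM0 n M0 Mn (leqnn M0)) => H2.
    have := ler_wpM2l K0 H2; rewrite mulr1 => H3.
    have := ler_distD (u M0 i) (u n i) 0; rewrite !subr0 => H4.
    have E : (u n - u M0) i = u n i - u M0 i by [].
    rewrite E in H; lra.
  have [L [HL _]] := ulim_ex UU UB.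
  exact: (@xgetPex _ 0 [set L | islim U (fun n => u n i) L] (ex_intro _ L HL)).
have key e : 0 < e -> exists M0, forall m, (M0 <= m)%N ->
    Th (u m - c) /\ nr (u m - c) < e.
  move=> e0; have e2 : 0 < e / 2 by rewrite divr_gt0.
  have [M0 HM0] := Cu _ e2; exists M0 => m Mm.
  pose r (n : nat) : V :=
    match pselect (exists2 f, M (u m - u n) f & N f < e / 2) with
    | left H => projT1 (cid2 H) | right _ => 0 end.
  have rP n : X (r n) /\ N (r n) <= e / 2.
    rewrite /r; case: pselect => [H|_]; last first.
      by rewrite (Nzero BX); split; [exact: (proj1 sX)|exact: ltW].
    by case: (cid2 H) => f [Xf _] Nf /=; split => //; exact: ltW.
  have rM n : (M0 <= n)%N -> M (u m - u n) (r n).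
    move=> Mn; rewrite /r; case: pselect => [H|nH].
      by case: (cid2 H).
    exfalso; apply: nH; apply: nr_lt; first exact: ThB.
    exact: HM0.
  have [rs [Xrs Nrs] Hrs] := weak_limit BX RX UU (fun n => proj1 (rP n))
    (fun n => proj2 (rP n)).
  have Mrs : M (u m - c) rs.
    split => // i.
    have hy : islim U (fun n => 1 * u m i + (-1) * u n i) (1 * u m i + (-1) * c i).
      exact: islim_lin (islim_const UU _) (cP i).
    rewrite !mul1r !mulN1r in hy.
    apply: (islim_ge UU (Hrs _ (g_dual i)) hy).
    apply: filterS (Uge M0) => n /= Mn.
    have [_ H] := rM n Mn; rewrite mulN1r; exact: H i.
  split; first by exists rs.
  by apply: le_lt_trans (nr_le Mrs) _; apply: le_lt_trans Nrs _; lra.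
exists c; split.
  have [M0 HM0] := key 1 ltr01.
  have [T1 _] := HM0 M0 (leqnn M0).
  have -> : c = u M0 - (u M0 - c) by rewrite opprB addrC subrK.
  exact: ThB.
move=> e e0; have [M0 HM0] := key e e0; exists M0 => n Mn.
by have [_ H] := HM0 n Mn.
Qed.

Lemma banach_Th : seq_space Th nr.
Proof.
split.
  split; first exact: Th0.
  by split; [move=> c d; apply: ThD|move=> a c; apply: ThZ].
split; last exact: complete_Th.
split; first exact: nr_ge0.
split; first exact: nr_def.
by split; [move=> a c; apply: nrZ|exact: nrD].
Qed.

End ThetaSec.

Section P23.
Variables (R : realType) (V : lmodType R) (X : set V) (N : V -> R)
  (g : nat -> V -> R).
Hypothesis BX : banach_on X N.
Hypothesis glin : forall i, linear_on X (g i).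
Hypothesis gK : forall i, exists K, 0 <= K /\ forall x, X x -> `|g i x| <= K * N x.
Hypothesis A1X : A1 X N g.

Let Nge0 : forall x, X x -> 0 <= N x := proj1 (proj1 (proj2 BX)).

Local Notation Th := (Theta X g).
Local Notation nr := (Theta_norm X N g).
Local Notation M := (Mset X g).

Lemma bessel_Th : bessel_with X N g Th nr 1.
Proof.
move=> f Xf.
have Mf : M (coef_seq g f) f by split => // i.
split; first by exists f.
rewrite mul1r; exact: (nr_le BX Mf).
Qed.

Lemma frame_iff : frame X N g Th nr <-> A3 X N g.
Proof.
split.
  move=> [A [B [A0 [_ HA]]]].
  exists (Num.min A 1); split; first by rewrite lt_min A0 ltr01.
  split; first by rewrite ge_min lexx orbT.
  move=> f Xf ft Mft.
  apply: le_trans (nr_le BX Mft).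
  apply: le_trans (HA f Xf).
  by apply: ler_wpM2r; [exact: Nge0|rewrite ge_min lexx].
move=> [A [A0 [A1' HA]]]; exists A, 1; split => //; split; first exact: bessel_Th.
move=> f Xf; apply: nr_glb => //; first by exists f; split => // i.
by move=> ft Mft; apply: HA.
Qed.

Lemma tight_of : A3_with X N g 1 -> tight_frame X N g Th nr.
Proof.
move=> HA; exists 1; split => //; split; first exact: bessel_Th.
move=> f Xf; apply: nr_glb => //; first by exists f; split => // i.
by move=> ft Mft; apply: HA.
Qed.

Hypothesis gnz : forall i, exists2 x, X x & g i x <> 0.

Lemma unit_Th j : Th (unit_vec R j).
Proof.
have [x Xx gx] := gnz j.
exists ((g j x)^-1 *: x); split; first exact: (proj2 (proj2 (proj1 BX))).
move=> i; rewrite /unit_vec; case: eqP => [->|_]; last by rewrite normr0 normr_ge0.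
by rewrite (gZ BX glin) // mulVf ?normr1 //; apply/eqP.
Qed.

Hypothesis RX : reflexive_on X N.

Definition Sn (a : nat -> R) (n : nat) : nat -> R := \sum_(j < n) a j *: unit_vec R j.

Lemma Sn_eval a n i : Sn a n i = if (i < n)%N then a i else 0.
Proof.
elim: n => [|n IH].
  by rewrite /Sn big_ord0.
rewrite /Sn big_ord_recr /=.
have -> : (\sum_(j < n) a j *: unit_vec R j + a n *: unit_vec R n) i =
  Sn a n i + a n * unit_vec R n i by [].
rewrite IH /unit_vec.
case: (eqVneq i n) => [->|inn]; first by rewrite ltnn ltnSn add0r mulr1.
have -> : (i < n.+1)%N = (i < n)%N by rewrite ltnS leq_eqVlt (negbTE inn).
by rewrite mulr0 addr0.
Qed.

Lemma Sn_tail c n : c - Sn c n = tail_seq c n.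
Proof.
apply: funext => i; rewrite /tail_seq.
have -> : (c - Sn c n) i = c i - Sn c n i by [].
by rewrite Sn_eval; case: ifP => _; rewrite ?subrr ?subr0.
Qed.

Lemma Th_Sn a n : Th (Sn a n).
Proof.
elim: n => [|n IH]; first by rewrite /Sn big_ord0; exact: Th0 g BX.
rewrite /Sn big_ord_recr /=; apply: (ThD A1X) => //.
by apply: (ThZ BX glin); apply: unit_Th.
Qed.

Lemma Th_tail c n : Th c -> Th (tail_seq c n).
Proof. by move=> Tc; rewrite -Sn_tail; apply: (ThB BX glin A1X) => //; exact: Th_Sn. Qed.

Lemma tail_mono c k n : Th c -> (k <= n)%N -> nr (tail_seq c n) <= nr (tail_seq c k).
Proof.
move=> Tc kn; have := solid_Th BX (c:=tail_seq c k) (d:=tail_seq c n) (Th_tail k Tc).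
case => // i; rewrite /tail_seq.
case: ifP => [_|]; first by rewrite normr0 normr_ge0.
move=> /negbT; rewrite -leqNgt => ni.
by rewrite ifF // ltnNge (leq_trans kn ni).
Qed.

Lemma coeff_eq c a : Th c ->
  nr (c - Sn a n) @[n --> \oo] --> (0 : R^o) -> a = c.
Proof.
move=> Tc cv; apply: funext => i.
have [K [K0 HK]] := coord_bound gK i.
apply/eqP; rewrite -subr_eq0 -normr_eq0 eq_le normr_ge0 andbT.
apply/ler_addgt0Pr => e e0; rewrite add0r.
have Kp : 0 < K + 1 by rewrite ltr_wpDl.
have := (@cvgrPdist_lt _ _ _ _ eventually_filter _ _).1 cv (e / (K + 1)) (divr_gt0 e0 Kp).
move=> H1.
have [n [h1 h2]] := filter_ex (filterI H1 (nbhs_infty_gt i)).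
move: h1 h2 => /= h1 h2.
have Tn : Th (c - Sn a n) by apply: (ThB BX glin A1X) => //; exact: Th_Sn.
have := HK _ Tn.
have -> : (c - Sn a n) i = c i - Sn a n i by [].
rewrite Sn_eval h2 distrC => H.
apply: le_trans H _.
have nr0 := nr_ge0 BX Tn.
rewrite sub0r normrN ger0_norm // in h1.
apply: le_trans (ler_wpM2l K0 (ltW h1)) _.
rewrite mulrA ler_pdivrMr //; nra.
Qed.

Lemma CB_iff : CB_space Th nr <-> A2 X N g.
Proof.
split.
  move=> [_ [_ Hs]] c Tc e e0.
  have [a [cv _]] := Hs c Tc.
  have ac := coeff_eq Tc cv.
  rewrite ac in cv.
  have := (@cvgrPdist_lt _ _ _ _ eventually_filter _ _).1 cv e e0 => H1.
  have [n [h1 h2]] := filter_ex (filterI H1 (nbhs_infty_gt 0)).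
  move: h1 h2 => /= h1 h2.
  exists n; split => //.
  have hn := nr_ge0 BX (Th_tail n Tc).
  rewrite Sn_tail sub0r normrN ger0_norm // in h1.
  exact: nr_lt (Th_tail n Tc) h1.
move=> HA2; split.
  split; first exact: banach_Th BX glin gK A1X RX.
  exact: BK_Th_coord BX glin gK A1X.
split; first exact: unit_Th.
move=> c Tc; exists c; split.
  apply/(@cvgrPdist_lt _ _ _ _ eventually_filter _ _).2 => e e0.
  have [k [k0 [f Mf Nf]]] := HA2 c Tc e e0.
  apply: filterS (nbhs_infty_ge k) => n kn /=.
  have hn := nr_ge0 BX (Th_tail n Tc).
  rewrite Sn_tail sub0r normrN ger0_norm //.
  apply: le_lt_trans (tail_mono Tc kn) _.
  exact: le_lt_trans (nr_le BX Mf) Nf.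
by move=> a cv; apply/esym; apply: coeff_eq cv.
Qed.

End P23.

Unset Implicit Arguments.

Theorem theorem5p1 (R : realType) (V : lmodType R)
  (X : nat -> set V) (N : nat -> V -> R) (g : nat -> V -> R) :
  (forall s, banach_on (X s) (N s)) ->
  (forall s, reflexive_on (X s) (N s)) ->
  (forall s, X s.+1 `<=` X s) ->
  [set (0 : V)] <> \bigcap_(s in [set: nat]) X s ->
  (forall s x, X s.+1 x -> N s x <= N s.+1 x) ->
  (forall s, dense_in (\bigcap_(t in [set: nat]) X t) (X s) (N s)) ->
  (forall i, dual_on (X 0%N) (N 0%N) (g i)) ->
  (forall i, exists2 x, X 0%N x & g i x <> 0) ->
  (forall s, A1 (X s) (N s) g) ->
  (* (P1) *)
  ((forall s, seq_space (Theta (X s) g) (Theta_norm (X s) (N s) g) /\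
              solid (Theta (X s) g) (Theta_norm (X s) (N s) g) /\
              BK_space (Theta (X s) g) (Theta_norm (X s) (N s) g)) /\
   \bigcap_(s in [set: nat]) Theta (X s) g <> [set (fun _ => 0 : R)] /\
   (forall s, Theta (X s.+1) g `<=` Theta (X s) g) /\
   (forall s c, Theta (X s.+1) g c ->
      Theta_norm (X s) (N s) g c <= Theta_norm (X s.+1) (N s.+1) g c) /\
   (forall s, bessel_with (X s) (N s) g (Theta (X s) g)
                (Theta_norm (X s) (N s) g) 1)) /\
  (* (P2) *)
  (forall s, (0 < s)%N ->
     (frame (X s) (N s) g (Theta (X s) g) (Theta_norm (X s) (N s) g)
        <-> A3 (X s) (N s) g) /\
     (A3_with (X s) (N s) g 1 ->
        tight_frame (X s) (N s) g (Theta (X s) g) (Theta_norm (X s) (N s) g))) /\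
  (* (P3) *)
  (forall s, (0 < s)%N ->
     (CB_space (Theta (X s) g) (Theta_norm (X s) (N s) g) <-> A2 (X s) (N s) g)).
Proof.
move=> BX RX Xdec _ Nmon dense gd gnz0 A1X.
have Xsub0 s : X s `<=` X 0%N.
  elim: s => [//|s IH] x Xx; apply: IH; exact: Xdec.
have N0le s x : X s x -> N 0%N x <= N s x.
  elim: s x => [//|s IH] x Xx.
  by apply: le_trans (IH x (Xdec _ _ Xx)) (Nmon _ _ Xx).
have glin s i : linear_on (X s) (g i).
  by move=> a x y Xx Xy; apply: (proj1 (gd i)); apply: Xsub0 Xx || apply: Xsub0 Xy.
have gK s i : exists K, 0 <= K /\ forall x, X s x -> `|g i x| <= K * N s x.
  have [K [K0 HK]] := dual_bounded (BX 0%N) (gd i).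
  exists K; split => // x Xx.
  apply: le_trans (HK _ (Xsub0 _ _ Xx)) _.
  by apply: ler_wpM2l => //; apply: N0le.
have gnzF i : exists2 y, (\bigcap_(t in [set: nat]) X t) y & g i y <> 0.
  have [x Xx gx] := gnz0 i.
  have gx0 : 0 < `|g i x| by rewrite normr_gt0; apply/eqP.
  have [d d0 Hd] := (proj2 (gd i)) x Xx _ gx0.
  have [y Fy Ny] := dense 0%N x Xx d d0.
  exists y => // gy0.
  have Xy : X 0%N y by apply: Fy.
  have := Hd y Xy.
  have E : N 0%N (y - x) = N 0%N (x - y).
    by rewrite -opprB (NN (BX 0%N) (XB (BX 0%N) Xx Xy)).
  rewrite E => /(_ Ny).
  by rewrite gy0 sub0r normrN ltxx.
have gnz s i : exists2 x, X s x & g i x <> 0.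
  by have [y Fy gy] := gnzF i; exists y => //; apply: Fy.
split.
  split.
    move=> s; split; first exact: banach_Th (BX s) (glin s) (gK s) (A1X s) (RX s).
    split; first exact: solid_Th (BX s).
    split; first exact: banach_Th (BX s) (glin s) (gK s) (A1X s) (RX s).
    exact: BK_Th_coord (BX s) (glin s) (gK s) (A1X s).
  split.
    have [y Fy gy] := gnzF 0%N.
    move=> E.
    have : (\bigcap_(s in [set: nat]) Theta (X s) g) (coef_seq g y).
      by move=> s _; exists y; split; [apply: Fy|].
    rewrite E => /(congr1 (fun c => c 0%N)) /=.
    by rewrite /coef_seq.
  split.
    by move=> s c [f [Xf Hf]]; exists f; split => //; apply: Xdec.
  split.
    move=> s c Tc; apply: nr_glb => // f [Xf Hf].
    apply: le_trans (Nmon _ _ Xf).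
    have Mf : Mset (X s) g c f by split => //; apply: Xdec.
    exact: (nr_le (BX s) Mf).
  by move=> s; apply: bessel_Th (BX s).
split.
  move=> s _; split; first exact: frame_iff (BX s).
  exact: tight_of (BX s).
move=> s _.
exact: CB_iff (BX s) (glin s) (gK s) (A1X s) (gnz s) (RX s).
Qed.
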